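(* Let $\mathbf{r},\mathbf{s}$ be two duplicate-free TP relations. The number of lineage-aware temporal windows produced by the window advancer, i.e., $|\mathbf{W}(\mathbf{r},\mathbf{s})|$, is at most $n_r+n_s-f_d$, where $n_r$ and $n_s$ are the numbers of interval start and end points in $\mathbf{r}$ and $\mathbf{s}$ respectively, and $f_d$ is the number of distinct facts occurring in $\mathbf{r}$ and $\mathbf{s}$.
   Context: A TP relation $\mathbf{r}$ is a finite set of tuples $r$ with fact $r.F$ (a tuple of ordinary attribute values), lineage $r.\lambda$ (for a base tuple, its own identifier), time interval $r.T=[T_s,T_e)$ over a finite ordered domain of time points, and probability $r.p\in(0,1]$; each tuple contributes one start point $T_s$ and one end point $T_e$. $\mathbf{r}$ is duplicate-free iff any two distinct tuples with the same fact have disjoint intervals. $\lambda^{\mathbf{r},f}_t$ is $r.\lambda$ if some $r\in\mathbf{r}$ has $r.F=f$ and $t\in r.T$, and $\mathtt{null}$ otherwise. The set $\mathbf{W}(\mathbf{r},\mathbf{s})$ of lineage-aware windows (which the window-advancer algorithm enumerates) consists of tuples $\tilde w=(F,T,\lambda_r,\lambda_s)$, $T$ an interval, $\lambda_r,\lambda_s$ lineage expressions or $\mathtt{null}$, such that for all $t\in\tilde w.T$: ($\lambda^{\mathbf{r},\tilde w.F}_t\neq\mathtt{null}$ or $\lambda^{\mathbf{s},\tilde w.F}_t\neq\mathtt{null}$) and $\tilde w.\lambda_r=\lambda^{\mathbf{r},\tilde w.F}_t$ and $\tilde w.\lambda_s=\lambda^{\mathbf{s},\tilde w.F}_t$; and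 for all $t'\notin\tilde w.T$: $\tilde w.\lambda_r\neq\lambda^{\mathbf{r},\tilde w.F}_{t'}$ or $\tilde w.\lambda_s\neq\lambda^{\mathbf{s},\tilde w.F}_{t'}$. *)

(* Defs.v *)
From HB Require Import structures.
From mathcomp Require Import all_boot all_order all_algebra.
Set Implicit Arguments. Unset Strict Implicit. Unset Printing Implicit Defensive.
Import Order.TTheory GRing.Theory Num.Theory.

(* Time points: natural numbers (a finite ordered domain embeds in nat).
   A TP tuple: fact, lineage (its own base identifier), interval [ts, te),
   probability. *)
Record tp_tuple (F Id : Type) (R : Type) := TPTuple {
  tp_fact : F;
  tp_lin  : Id;
  tp_ts   : nat;
  tp_te   : nat;
  tp_prob : R }.

Definition in_interval (a b t : nat) : bool := (a <= t) && (t < b).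

Section TP.
Variables (F Id : eqType) (R : realFieldType).
Local Notation tuple := (tp_tuple F Id R).

Definition tp_relation (r : seq tuple) : Prop :=
  (forall (x0 : tuple) (i : nat), (i < size r)%N ->
     [/\ (tp_ts (nth x0 r i) < tp_te (nth x0 r i))%N,
         (0 < tp_prob (nth x0 r i))%R & (tp_prob (nth x0 r i) <= 1)%R]) /\
  (forall (x0 : tuple) (i j : nat), (i < size r)%N -> (j < size r)%N -> i <> j ->
     tp_lin (nth x0 r i) <> tp_lin (nth x0 r j)).

Definition duplicate_free (r : seq tuple) : Prop :=
  forall (x0 : tuple) (i j : nat), (i < size r)%N -> (j < size r)%N -> i <> j ->
    tp_fact (nth x0 r i) = tp_fact (nth x0 r j) ->
    forall t, ~~ (in_interval (tp_ts (nth x0 r i)) (tp_te (nth x0 r i)) t &&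
                  in_interval (tp_ts (nth x0 r j)) (tp_te (nth x0 r j)) t).

(* lambda^{r,f}_t : the lineage of the tuple of r with fact f valid at t,
   or None (= null).  (Unique for duplicate-free r.) *)
Definition lam (r : seq tuple) (f : F) (t : nat) : option Id :=
  match [seq x <- r | (tp_fact x == f) && in_interval (tp_ts x) (tp_te x) t] with
  | x :: _ => Some (tp_lin x)
  | [::] => None
  end.

(* A lineage-aware window (F, [a,b), lambda_r, lambda_s). *)
Definition window := (F * nat * nat * option Id * option Id)%type.

Definition is_window (r s : seq tuple) (w : window) : Prop :=
  let: (f, a, b, lr, ls) := w in
  (a < b)%N /\
  (forall t, in_interval a b t ->
     [/\ (lam r f t != None) || (lam s f t != None),
         lr = lam r f t & ls = lam s f t]) /\
  (forall t', ~~ in_interval a b t' -> lr <> lam r f t' \/ ls <> lam s f t').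

Definition n_points (r : seq tuple) : nat := 2 * size r.

Definition n_facts (r s : seq tuple) : nat := size (undup (map (@tp_fact _ _ _) (r ++ s))).

End TP.

(* Main.v *)
Require Import Defs.
From mathcomp Require Import all_boot all_order all_algebra.
From mathcomp Require Import zify.
From HB Require Import structures.

Definition tp2p (F Id R : Type) (x : tp_tuple F Id R) :=
  (tp_fact x, tp_lin x, tp_ts x, tp_te x, tp_prob x).
Definition p2tp (F Id R : Type) (p : F * Id * nat * nat * R) : tp_tuple F Id R :=
  let: (a, b, c, d, e) := p in TPTuple a b c d e.
Lemma tpK (F Id R : Type) : cancel (@tp2p F Id R) (@p2tp F Id R).
Proof. by case. Qed.
HB.instance Definition _ (F Id R : eqType) :=
  Equality.copy (tp_tuple F Id R) (can_type (@tpK F Id R)).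

Section Aux.
Variables (F Id : eqType) (R : realFieldType).
Local Notation tuple := (tp_tuple F Id R).

Lemma lam_some (r : seq tuple) f t : lam r f t != None ->
  exists2 x, x \in r & (tp_fact x == f) && in_interval (tp_ts x) (tp_te x) t.
Proof.
rewrite /lam; case E: [seq _ <- r | _] => [|x l] //= _.
have : x \in [seq x <- r | (tp_fact x == f) && in_interval (tp_ts x) (tp_te x) t].
  by rewrite E inE eqxx.
by rewrite mem_filter => /andP[H1 H2]; exists x.
Qed.

Lemma lam_change (r : seq tuple) f t : lam r f t <> lam r f t.+1 ->
  exists2 x, x \in r & (tp_fact x == f) && ((tp_ts x == t.+1) || (tp_te x == t.+1)).
Proof.
move=> Hne.
case: (boolP (has (fun x => (tp_fact x == f) && ((tp_ts x == t.+1) || (tp_te x == t.+1))) r)).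
  by move/hasP.
move/hasPn => H; exfalso; apply: Hne; rewrite /lam.
suff -> : [seq x <- r | (tp_fact x == f) && in_interval (tp_ts x) (tp_te x) t] =
          [seq x <- r | (tp_fact x == f) && in_interval (tp_ts x) (tp_te x) t.+1] by [].
apply: eq_in_filter => x /H /=.
case: (tp_fact x == f) => //=; rewrite /in_interval => /norP[/eqP h1 /eqP h2].
apply/idP/idP => /andP[h3 h4]; apply/andP; split; lia.
Qed.

Definition maxte (f : F) (L : seq tuple) : nat :=
  foldr (fun x m => if tp_fact x == f then maxn (tp_te x) m else m) 0%N L.

Lemma maxte_ge f (L : seq tuple) x : x \in L -> tp_fact x = f -> (tp_te x <= maxte f L)%N.
Proof.
elim: L => //= y L IH; rewrite inE => /orP[/eqP -> ->|xL fx].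
  by rewrite eqxx leq_maxl.
have := IH xL fx; case: (tp_fact y == f) => // h; apply: (leq_trans h); exact: leq_maxr.
Qed.

Lemma maxte_mem f (L : seq tuple) : f \in map (@tp_fact _ _ _) L ->
  exists2 x, x \in L & (tp_fact x == f) && (tp_te x == maxte f L).
Proof.
elim: L => //= y L IH; rewrite inE.
case: (boolP (tp_fact y == f)) => hy.
  case: (leqP (maxte f L) (tp_te y)) => hm _.
    exists y; first by rewrite inE eqxx.
    by rewrite hy /=.
  have : f \in [seq tp_fact i | i <- L].
    case: (boolP (f \in [seq tp_fact i | i <- L])) => // hn.
    suff e0 : maxte f L = 0%N by rewrite e0 in hm.
    elim: L {IH hm} hn => //= z L IHL; rewrite inE negb_or => /andP[h1 h2].
    by rewrite /maxte /= eq_sym (negbTE h1) -/(maxte f L) IHL.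
  move/IH => [x xL /andP[hx /eqP ex]]; exists x; first by rewrite inE xL orbT.
  by rewrite hx /=; apply/eqP; rewrite ex.
move=> /orP[/eqP e|]; first by rewrite e eqxx in hy.
move/IH => [x xL hx]; exists x; first by rewrite inE xL orbT.
exact: hx.
Qed.

Definition key (w : window F Id) : F * nat := let: (f, a, b, lr, ls) := w in (f, a).

Lemma key_inj (r s : seq tuple) (w1 w2 : window F Id) : is_window r s w1 -> is_window r s w2 ->
  key w1 = key w2 -> w1 = w2.
Proof.
case: w1 => [[[[f1 a1] b1] l1] m1]; case: w2 => [[[[f2 a2] b2] l2] m2] /=.
move=> [h1 [i1 o1]] [h2 [i2 o2]] [ef ea]; subst f2 a2.
have ia1 : in_interval a1 b1 a1 by rewrite /in_interval leqnn h1.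
have ia2 : in_interval a1 b2 a1 by rewrite /in_interval leqnn h2.
have [_ e1 e2] := i1 _ ia1; have [_ e3 e4] := i2 _ ia2; subst l1 m1 l2 m2.
case: (ltngtP b1 b2) => hb; last by rewrite hb.
- have ib : in_interval a1 b2 b1 by rewrite /in_interval hb; apply/andP; split=> //; lia.
  have [_ e5 e6] := i2 _ ib.
  have nb : ~~ in_interval a1 b1 b1 by rewrite /in_interval ltnn andbF.
  by case: (o1 _ nb).
- have ib : in_interval a1 b1 b2 by rewrite /in_interval hb; apply/andP; split=> //; lia.
  have [_ e5 e6] := i1 _ ib.
  have nb : ~~ in_interval a1 b2 b2 by rewrite /in_interval ltnn andbF.
  by case: (o2 _ nb).
Qed.

Definition pts (L : seq tuple) : seq (F * nat) :=
  flatten (map (fun x => [:: (tp_fact x, tp_ts x); (tp_fact x, tp_te x)]) L).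

Lemma size_pts L : size (pts L) = (2 * size L)%N.
Proof. elim: L => //= x L IH; rewrite IH; lia. Qed.

Lemma window_key (r s : seq tuple) (w : window F Id) : is_window r s w ->
  key w \in pts (r ++ s) /\ (key w).2 < maxte (key w).1 (r ++ s) /\
  (key w).1 \in map (@tp_fact _ _ _) (r ++ s).
Proof.
case: w => [[[[f a] b] lr] ls] /= [hab [hin hout]].
have ia : in_interval a b a by rewrite /in_interval leqnn hab.
have [hnn elr els] := hin _ ia.
have [y yL /andP[/eqP fy iy]] : exists2 y, y \in r ++ s &
   (tp_fact y == f) && in_interval (tp_ts y) (tp_te y) a.
  case/orP: hnn => /lam_some [y yL hy]; exists y => //; by rewrite mem_cat yL ?orbT.
move: iy; rewrite /in_interval => /andP[y1 y2].
split; last split.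
- have [x xL /andP[/eqP fx hx]] : exists2 x, x \in r ++ s &
     (tp_fact x == f) && ((tp_ts x == a) || (tp_te x == a)).
    case: a hab hin hout ia elr els y1 y2 hnn => [|a'] hab hin hout ia elr els y1 y2 hnn.
      by exists y => //; rewrite fy eqxx /=; move: y1; rewrite leqn0 => ->.
    have na : ~~ in_interval a'.+1 b a' by rewrite /in_interval ltnn.
    case: (hout _ na) => hne.
      have [x xr hx] : exists2 x, x \in r & (tp_fact x == f) &&
          ((tp_ts x == a'.+1) || (tp_te x == a'.+1)).
        by apply: lam_change => e; apply: hne; rewrite elr e.
      by exists x; rewrite ?mem_cat ?xr.
    have [x xr hx] : exists2 x, x \in s & (tp_fact x == f) &&
        ((tp_ts x == a'.+1) || (tp_te x == a'.+1)).
      by apply: lam_change => e; apply: hne; rewrite els e.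
    by exists x; rewrite ?mem_cat ?xr ?orbT.
  apply/flatten_mapP; exists x => //; rewrite fx.
  by case/orP: hx => /eqP ->; rewrite !inE eqxx ?orbT.
- by apply: (leq_trans y2); apply: maxte_ge.
- by apply/mapP; exists y.
Qed.

End Aux.
Arguments window_key {F Id R r s w}.
Arguments maxte_mem {F Id R f L}.
Arguments key_inj {F Id R r s w1 w2}.
Arguments pts {F Id R}.
Arguments size_pts {F Id R}.

Theorem proposition1 (F Id : eqType) (R : realFieldType)
    (r s : seq (tp_tuple F Id R)) :
  tp_relation r -> tp_relation s ->
  duplicate_free r -> duplicate_free s ->
  forall ws : seq (window F Id),
    uniq ws -> (forall w, w \in ws -> is_window r s w) ->
    (size ws <= n_points r + n_points s - n_facts r s)%N.
Proof.
move=> _ _ _ _ ws uws hws.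
set L := r ++ s.
set M := [seq (f, @maxte F Id R f L) | f <- undup (map (@tp_fact _ _ _) L)].
have uK : uniq (map (@key _ _) ws).
  rewrite map_inj_in_uniq // => w1 w2 h1 h2; apply: key_inj; exact: hws.
have uM : uniq M.
  apply: (@map_uniq _ _ fst); rewrite -map_comp /=.
  by rewrite (@eq_map _ _ _ id) ?map_id ?undup_uniq.
have hu : uniq (map (@key _ _) ws ++ M).
  rewrite cat_uniq uK uM andbT /=; apply/hasPn => p /mapP[f _ ->].
  apply/negP => /mapP[w wi ek].
  have [_ [hlt _]] := window_key (hws _ wi).
  by rewrite -ek /= ltnn in hlt.
have hs : {subset map (@key _ _) ws ++ M <= pts L}.
  move=> p; rewrite mem_cat => /orP[/mapP[w wi ->]|/mapP[f fi ->]].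
    by have [] := window_key (hws _ wi).
  rewrite mem_undup in fi.
  have [x xL /andP[/eqP fx /eqP tx]] := maxte_mem fi.
  apply/flatten_mapP; exists x => //; by rewrite fx tx !inE eqxx orbT.
have := uniq_leq_size hu hs.
rewrite size_cat !size_map size_pts /L size_cat /n_points /n_facts; lia.
Qed.
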